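(* Let $a$ be a positive integer. The number of distinct $c$-triangles in $\Gamma$ having $a$ as a vertex equals the number of allowable pairs $(m,n)$ satisfying $m^3+2m^2n+mn^2+n^3=a$.
   Context: An allowable pair is $(m,n)\in\mathbb{Z}^2$ with $\gcd(m,n)=1$ and $mn(m+n)\neq0$. Let $t_1(m,n)=m^3+2m^2n+mn^2+n^3$, $t_2(m,n)=m^3-mn^2-n^3$, $t_3(m,n)=m^3+2m^2n+3mn^2+n^3$. For an allowable pair, $c=-A(m,n)/B(m,n)$ with $A(m,n)=m^6+2m^5n+4m^4n^2+8m^3n^3+9m^2n^4+4mn^5+n^6$, $B(m,n)=4m^2n^2(m+n)^2$; these are exactly the rational $c$ for which $f_c(x)=x^2+c$ has a rational $3$-cycle, and the cycle is $\{\frac{t_1}{2mn(m+n)},\frac{t_2}{2mn(m+n)},-\frac{t_3}{2mn(m+n)}\}$ in lowest terms. The graph $\Gamma$ has vertex set the positive integers, with an edge between $a\neq b$ iff there is an allowable pair $(m,n)$ and $i\neq j$ in $\{1,2,3\}$ with $a=|t_i(m,n)|$, $b=|t_j(m,n)|$. For such $c$, the $c$-triangle is the triangle of $\Gamma$ with vertices $|t_1(m,n)|,|t_2(m,n)|,|t_3(m,n)|$ (the absolute values of the numerators of the $3$-cycle of $f_c$); distinct $c$-triangles means $c$-triangles for distinct values of $c$. *)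

(* Defs.v *)
From HB Require Import structures.
From mathcomp Require Import all_boot all_order all_algebra.
Set Implicit Arguments. Unset Strict Implicit. Unset Printing Implicit Defensive.
Import Order.TTheory GRing.Theory Num.Theory.
Local Open Scope ring_scope.

Definition t1 (m n : int) : int := m ^+ 3 + 2 * m ^+ 2 * n + m * n ^+ 2 + n ^+ 3.
Definition t2 (m n : int) : int := m ^+ 3 - m * n ^+ 2 - n ^+ 3.
Definition t3 (m n : int) : int := m ^+ 3 + 2 * m ^+ 2 * n + 3 * m * n ^+ 2 + n ^+ 3.

Definition Apoly (m n : int) : int :=
  m ^+ 6 + 2 * m ^+ 5 * n + 4 * m ^+ 4 * n ^+ 2 + 8 * m ^+ 3 * n ^+ 3
  + 9 * m ^+ 2 * n ^+ 4 + 4 * m * n ^+ 5 + n ^+ 6.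
Definition Bpoly (m n : int) : int := 4 * m ^+ 2 * n ^+ 2 * (m + n) ^+ 2.

Definition allowable (m n : int) : Prop :=
  gcdz m n = 1%N /\ m * n * (m + n) != 0.

Definition cval (m n : int) : rat := - ((Apoly m n)%:~R / (Bpoly m n)%:~R).

Definition c_triangle_has_vertex (c : rat) (a : nat) : Prop :=
  exists m n : int, [/\ allowable m n, cval m n = c &
    [\/ a = `|t1 m n|%N, a = `|t2 m n|%N | a = `|t3 m n|%N]].

Definition equinumerous (A B : Type) : Prop :=
  exists f : A -> B, bijective f.

(* Main.v *)
Require Import Defs.
From HB Require Import structures.
From mathcomp Require Import all_boot all_order all_algebra.
From mathcomp Require Import ring lra zify.
From Stdlib Require Import ProofIrrelevance ClassicalEpsilon.
Import Order.TTheory GRing.Theory Num.Theory.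
Local Open Scope ring_scope.
Set Implicit Arguments.

Lemma Qpos (m n : int) : m != 0 -> 0 < m^+2 + m*n + n^+2.
Proof.
move=> m0. have h : 0 < m ^+ 2 by rewrite lt0r sqr_ge0 sqrf_eq0 m0.
have h2 : 0 <= (2 * m + n)^+2 by rewrite sqr_ge0.
have h3 : 0 <= n^+2 by rewrite sqr_ge0.
nra.
Qed.

Lemma alg (u1 u2 u3 v1 v2 v3 A E F : int) : E != 0 -> u1 != 0 -> F^+2 = E^+2 -> u1 = v1 ->
 u1^+2 - A = u2 * (2*E) -> u2^+2 - A = - u3*(2*E) -> u3^+2 - A = u1*(2*E) ->
 v1^+2 - A = v2 * (2*F) -> v2^+2 - A = - v3*(2*F) -> v3^+2 - A = v1*(2*F) ->
 F = E /\ u2 = v2 /\ u3 = v3.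
Proof.
move=> E0 u0 hF <- h1 h2 h3 k1 k2 k3.
have E2 : (2 * E) != 0 by rewrite mulf_neq0.
have : (F - E) * (F + E) == 0 by rewrite -subr_sqr hF subrr.
rewrite mulf_eq0 subr_eq0 addr_eq0 => /orP [/eqP hFE | /eqP hFE].
- subst F.
  have e2 : v2 = u2 by apply: (mulIf E2); rewrite -k1 h1.
  subst v2.
  have e3 : v3 = u3.
    apply: (mulIf E2); apply: oppr_inj; rewrite -!mulNr -k2 h2 //.
  by subst v3.
- exfalso. subst F.
  have e2 : v2 = - u2.
    apply: (mulIf E2).
    have e : v2 * (2 * - E) = u2 * (2*E) by rewrite -k1 h1.
    by rewrite mulNr -e; ring.
  subst v2.
  have e3 : v3 = - u3.
    apply: (mulIf E2).
    have e : - v3 * (2 * - E) = - u3 * (2*E) by rewrite -k2 -h2 sqrrN.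
    by rewrite -e; ring.
  subst v3.
  have e : u1 * (2 * - E) = u1 * (2*E) by rewrite -k3 -h3 sqrrN.
  have : u1 * (2*E) * 2 == 0.
    have -> : u1 * (2*E) * 2 = u1 * (2*E) - u1 * (2 * - E) by ring.
    by rewrite e subrr.
  by rewrite !mulf_eq0 (negbTE u0) (negbTE E0).
Qed.

Arguments alg {u1 u2 u3 v1 v2 v3 A E F}.

Lemma alg2 m n m' n' : m != 0 -> m' != 0 -> t1 m n = t1 m' n' -> t2 m n = t2 m' n' -> t3 m n = t3 m' n' -> m = m' /\ n = n'.
Proof.
move=> m0 m0' h1 h2 h3.
have Q0 : m^+2 + m*n + n^+2 != 0 by rewrite gt_eqF ?Qpos.
have Q0' : m'^+2 + m'*n' + n'^+2 != 0 by rewrite gt_eqF ?Qpos.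
set Q := m^+2 + m*n + n^+2 in Q0 *. set Q' := m'^+2 + m'*n' + n'^+2 in Q0' *.
have two0 : (2:int) != 0 by [].
have e1 : m * Q = m' * Q'.
  apply: (mulfI two0).
  have -> : 2 * (m * Q) = t2 m n + t3 m n by rewrite /t2 /t3 /Q; ring.
  have -> : 2 * (m' * Q') = t2 m' n' + t3 m' n' by rewrite /t2 /t3 /Q'; ring.
  by rewrite h2 h3.
have e2 : n * Q = n' * Q'.
  apply: (mulfI two0).
  have -> : 2 * (n * Q) = t1 m n - t2 m n by rewrite /t1 /t2 /Q; ring.
  have -> : 2 * (n' * Q') = t1 m' n' - t2 m' n' by rewrite /t1 /t2 /Q'; ring.
  by rewrite h1 h2.
have e3 : m * n' = m' * n.
  apply: (mulIf (mulf_neq0 Q0 Q0')).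
  have -> : m * n' * (Q * Q') = (m * Q) * (n' * Q') by ring.
  rewrite e1 -e2; ring.
have e4 : m ^+ 2 * Q' = m' ^+ 2 * Q.
  rewrite /Q /Q'. have -> : m ^+ 2 * (m' ^+ 2 + m' * n' + n' ^+ 2) = m^+2 * m'^+2 + m * m' * (m * n') + (m * n') ^+ 2 by ring.
  rewrite e3; ring.
have e5 : m ^+ 3 = m' ^+ 3.
  apply: (mulIf Q0).
  have -> : m ^+ 3 * Q = m ^+ 2 * (m * Q) by ring.
  rewrite e1. have -> : m ^+ 2 * (m' * Q') = m' * (m ^+2 * Q') by ring.
  rewrite e4; ring.
have em : m = m'.
  have : (m - m') * (m ^+ 2 + m * m' + m' ^+ 2) == 0.
    apply/eqP; have -> : (m - m') * (m ^+ 2 + m * m' + m' ^+ 2) = m ^+ 3 - m' ^+ 3 by ring.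
    by rewrite e5 subrr.
  rewrite mulf_eq0 subr_eq0 (gt_eqF (@Qpos m m' m0)) orbF => /eqP //.
subst m'. split=> //. by apply: (mulfI m0).
Qed.
Lemma coprimeAE m n : allowable m n -> coprimez (Apoly m n) (m*n*(m+n)).
Proof.
case=> g _. have cmn : coprimez m n by rewrite /coprimez g.
rewrite !coprimezMr -andbA; apply/and3P; split.
- rewrite coprimez_sym /coprimez.
  have -> : Apoly m n = (m ^+ 5 + 2 * m ^+ 4 * n + 4 * m ^+ 3 * n ^+ 2 + 8 * m ^+ 2 * n ^+ 3 + 9 * m * n ^+ 4 + 4 * n ^+ 5) * m + n ^+ 6
    by rewrite /Apoly; ring.
  by rewrite gcdzMDl; apply: coprimezXr.
- rewrite coprimez_sym /coprimez.
  have -> : Apoly m n = (2 * m ^+ 5 + 4 * m ^+ 4 * n + 8 * m ^+ 3 * n ^+ 2 + 9 * m ^+ 2 * n ^+ 3 + 4 * m * n ^+ 4 + n ^+ 5) * n + m ^+ 6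
    by rewrite /Apoly; ring.
  by rewrite gcdzMDl; apply: coprimezXr; rewrite coprimez_sym.
- rewrite coprimez_sym /coprimez.
  have -> : Apoly m n = (n ^+ 5 + 3 * m * n ^+ 4 + 6 * m ^+ 2 * n ^+ 3 + 2 * m ^+ 3 * n ^+ 2 + 2 * m ^+ 4 * n) * (m + n) + m ^+ 6
    by rewrite /Apoly; ring.
  rewrite gcdzMDl; apply: coprimezXr.
  by rewrite coprimez_sym /coprimez gcdzDl.
Qed.

Arguments coprimeAE {m n}.
Lemma cval_eq m n m' n' : allowable m n -> allowable m' n' ->
  cval m n = cval m' n' ->
  Apoly m n = Apoly m' n' /\ (m*n*(m+n)) ^+ 2 = (m'*n'*(m'+n')) ^+ 2.
Proof.
move=> hm hm'; have cA := @coprimeAE m n hm; have cA' := @coprimeAE m' n' hm'.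
case: hm => _ hE; case: hm' => _ hE'.
set E := m*n*(m+n) in cA hE *; set E' := m'*n'*(m'+n') in cA' hE' *.
have hB : Bpoly m n = 4 * E ^+ 2 by rewrite /Bpoly /E; ring.
have hB' : Bpoly m' n' = 4 * E' ^+ 2 by rewrite /Bpoly /E'; ring.
have B0 : Bpoly m n != 0 by rewrite hB mulf_neq0 // expf_neq0.
have B0' : Bpoly m' n' != 0 by rewrite hB' mulf_neq0 // expf_neq0.
rewrite /cval => /oppr_inj /eqP.
rewrite eqr_div ?intr_eq0 // -!intrM => /eqP /intr_inj.
rewrite hB hB' => h.
have h2 : Apoly m n * E' ^+ 2 = Apoly m' n' * E ^+ 2 by nia.
have d1 : (E ^+ 2 %| E' ^+ 2)%Z.
  rewrite -(@Gauss_dvdzl _ _ (Apoly m n)); last by apply: coprimezXl; rewrite coprimez_sym.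
  by rewrite mulrC h2 dvdz_mull.
have d2 : (E' ^+ 2 %| E ^+ 2)%Z.
  rewrite -(@Gauss_dvdzl _ _ (Apoly m' n')); last by apply: coprimezXl; rewrite coprimez_sym.
  by rewrite mulrC -h2 dvdz_mull.
have hEE : E ^+ 2 = E' ^+ 2.
  rewrite !dvdzE in d1 d2.
  have H0 : forall x y : nat, (x %| y)%N -> (y %| x)%N -> x = y by move=> x y a b; apply/eqP; rewrite eqn_dvd a b.
  have := congr1 Posz (H0 _ _ d1 d2).
  by rewrite !abszE !ger0_norm ?sqr_ge0.
split=> //.
rewrite hEE in h2.
apply: (mulIf (expf_neq0 2 hE')). done.
Qed.
Lemma t1N m n : t1 (-m) (-n) = - t1 m n. Proof. rewrite /t1; ring. Qed.
Lemma t1T m n : t1 (-(m+n)) m = t2 m n. Proof. rewrite /t1 /t2; ring. Qed.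
Lemma t1TN m n : t1 (m+n) (-m) = - t2 m n. Proof. rewrite /t1 /t2; ring. Qed.
Lemma t1S m n : t1 n (-(m+n)) = - t3 m n. Proof. rewrite /t1 /t3; ring. Qed.
Lemma t1SN m n : t1 (-n) (m+n) = t3 m n. Proof. rewrite /t1 /t3; ring. Qed.
Lemma cvalN m n : cval (-m) (-n) = cval m n.
Proof. rewrite /cval /Apoly /Bpoly; congr (- (_%:~R / _%:~R)); ring. Qed.
Lemma cvalT m n : cval (-(m+n)) m = cval m n.
Proof. rewrite /cval /Apoly /Bpoly; congr (- (_%:~R / _%:~R)); ring. Qed.
Lemma cvalS m n : cval n (-(m+n)) = cval m n.
Proof. rewrite /cval /Apoly /Bpoly; congr (- (_%:~R / _%:~R)); ring. Qed.


Lemma inj_pair m n m' n' : allowable m n -> allowable m' n' -> cval m n = cval m' n' ->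
  t1 m n = t1 m' n' -> t1 m n != 0 -> m = m' /\ n = n'.
Proof.
move=> hm hm' hc ht ht0.
have [hA hE] := cval_eq hm hm' hc.
have E0 := hm.2. have E0' := hm'.2.
have m0 : m != 0 by apply: contraNneq E0 => ->; rewrite !mul0r.
have m0' : m' != 0 by apply: contraNneq E0' => ->; rewrite !mul0r.
have i1 x y : t1 x y ^+ 2 - Apoly x y = t2 x y * (2 * (x*y*(x+y))) by rewrite /t1 /t2 /Apoly; ring.
have i2 x y : t2 x y ^+ 2 - Apoly x y = - t3 x y * (2 * (x*y*(x+y))) by rewrite /t3 /t2 /Apoly; ring.
have i3 x y : t3 x y ^+ 2 - Apoly x y = t1 x y * (2 * (x*y*(x+y))) by rewrite /t1 /t3 /Apoly; ring.
have k1 := i1 m' n'; have k2 := i2 m' n'; have k3 := i3 m' n'.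
rewrite -hA in k1 k2 k3.
have [_ [e2 e3]] := alg E0 ht0 (esym hE) ht (i1 m n) (i2 m n) (i3 m n) k1 k2 k3.
exact: alg2.
Qed.

Arguments inj_pair {m n m' n'}.
Lemma allN m n : allowable m n -> allowable (-m) (-n).
Proof.
case=> g e; split; first by rewrite gcdNz gcdzN.
have -> : (-m) * (-n) * (-m + -n) = - (m * n * (m + n)) by ring.
by rewrite oppr_eq0.
Qed.

Lemma allT m n : allowable m n -> allowable (-(m+n)) m.
Proof.
case=> g e; split; first by rewrite gcdNz gcdzC gcdzDl.
have -> : (-(m+n)) * m * (-(m+n) + m) = m * n * (m + n) by ring.
done.
Qed.

Lemma allS m n : allowable m n -> allowable n (-(m+n)).
Proof.
case=> g e; split; first by rewrite gcdzN gcdzDr gcdzC.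
have -> : n * (-(m+n)) * (n + -(m+n)) = m * n * (m + n) by ring.
done.
Qed.

Lemma sgn_abs (x : int) (a : nat) : a = `|x|%N -> x = a%:Z \/ - x = a%:Z.
Proof.
move=> ->; rewrite abszE.
have [h|h] := lerP 0 x; [left; rewrite ger0_norm // | right; rewrite ltr0_norm //].
Qed.

Arguments allN {m n}.
Arguments allT {m n}.
Arguments allS {m n}.
Arguments sgn_abs {x a}.
Arguments cval_eq {m n m' n'}.
Theorem theorem10 (a : nat) (ha : (0 < a)%N) :
  equinumerous {c : rat | c_triangle_has_vertex c a}
               {p : int * int | allowable p.1 p.2 /\ t1 p.1 p.2 = a%:Z}.
Proof.
pose P := {p : int * int | allowable p.1 p.2 /\ t1 p.1 p.2 = a%:Z}.
have gP : forall p : P, c_triangle_has_vertex (cval (sval p).1 (sval p).2) a.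
  move=> [[m n] [hal ht]] /=. exists m, n; split=> //. by apply: Or31; rewrite ht.
pose g (p : P) : {c : rat | c_triangle_has_vertex c a} := exist (fun c => c_triangle_has_vertex c a) _ (gP p).
have ginj : injective g.
  move=> [[m n] [h1 h2]] [[m' n'] [h1' h2']] /(congr1 sval) /= hc.
  have ht0 : t1 m n != 0 by rewrite h2 -lt0n.
  have [em en] := inj_pair h1 h1' hc (etrans h2 (esym h2')) ht0.
  idtac.
  rewrite /= in em en; subst m' n'. f_equal. apply: proof_irrelevance.
have gsurj : forall c, exists p, g p = c.
  move=> [c [m [n [hal hc hv]]]].
  suff [p hp] : exists p : P, cval (sval p).1 (sval p).2 = c.
    exists p. rewrite /g. move: (gP p). rewrite hp => pf. f_equal. apply: proof_irrelevance.
  case: hv => [ha'|ha'|ha']; have [hx|hx] := sgn_abs ha'.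
  - by exists (exist _ (m, n) (conj hal hx)).
  - have h : t1 (-m) (-n) = a%:Z by rewrite t1N.
    by exists (exist _ (-m, -n) (conj (allN hal) h)); rewrite /= cvalN.
  - have h : t1 (-(m+n)) m = a%:Z by rewrite t1T.
    by exists (exist _ (-(m+n), m) (conj (allT hal) h)); rewrite /= cvalT.
  - have h : t1 (-(-(m+n))) (-m) = a%:Z by rewrite t1N t1T.
    by exists (exist _ (-(-(m+n)), -m) (conj (allN (allT hal)) h)); rewrite /= cvalN cvalT.
  - have h : t1 (-n) (-(-(m+n))) = a%:Z by rewrite t1N t1S opprK.
    by exists (exist _ (-n, -(-(m+n))) (conj (allN (allS hal)) h)); rewrite /= cvalN cvalS.
  - have h : t1 n (-(m+n)) = a%:Z by rewrite t1S.
    by exists (exist _ (n, -(m+n)) (conj (allS hal) h)); rewrite /= cvalS.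
pose f c : P := proj1_sig (constructive_indefinite_description _ (gsurj c)).
have fK : forall c, g (f c) = c.
  move=> c; rewrite /f; case: (constructive_indefinite_description _ _) => //.
exists f; exists g => // p; apply: ginj; exact: fK.
Qed.
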